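(* In the Karma DPG, let $(\mu^*,\pi^* )$ be a Stationary Nash Equilibrium satisfying the action-gap condition: for every $x\in\mathcal{X}$ there is a unique maximizer $\pi^*(x)$ of $a\mapsto Q^*[x,a](s^* )$ and $$\delta:=\min_{x\in\mathcal{X}}\Big(Q^*[x,\pi^*(x)](s^* )-\max_{a\ne\pi^*(x)}Q^*[x,a](s^* )\Big)>0,\quad s^*=(\mu^*,\pi^* ).$$ Suppose $N>2C_{MF}/\delta$. Then for every $\tilde\mu^{agent}\in\mathcal{M}$ and $\tilde\pi\in\Pi$, with $\tilde s=\big(\tfrac{N-1}{N}\mu^*+\tfrac1N\tilde\mu^{agent},\ \tfrac{N-1}{N}\pi^*+\tfrac1N\tilde\pi\big)$, for every $x\in\mathcal{X}$ the action $\pi^*(x)$ is the unique maximizer of $a\mapsto Q^*[x,a](\tilde s)$; i.e. the optimal (greedy) policy of the MDP with mean field $\tilde s$ coincides with that at $s^*$.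
   Context: Karma DPG as follows. $\mathcal{U}\subset\mathbb{R}_{>0}$ finite, $K\in\mathbb{N}$, $\mathcal{X}=\mathcal{U}\times\{0,\dots,K\}$, actions $\mathcal{A}[k]=\{0,\dots,k\}$ in state $(u,k)$, discount $\alpha\in[0,1)$. $\mathcal{M}=\Delta(\mathcal{X})$, $\Pi$ the set of stationary policies; $\mathcal{M}\times\Pi$ carries a fixed norm $\|\cdot\|$. Reward $r[(u,k),a](\mu,\pi)=u\,\gamma[\texttt{win}\mid a](\mu,\pi)$ with $\gamma[\texttt{win}\mid a]=\sum_{(u',k')}\sum_{a'}\mu[u',k']\pi[a'\mid u',k']\mathbb{P}[\texttt{win}\mid a,a']$, $\mathbb{P}[\texttt{win}\mid a,a']=1,0,\tfrac12$ for $a>a'$, $a<a'$, $a=a'$. Transitions $p[(u^+,k^+)\mid(u,k),a](\mu,\pi)=\phi[u^+\mid u]\kappa[k^+\mid k,a](\mu,\pi)$, $\phi$ a fixed Markov kernel on $\mathcal U$, $\kappa$ the pay-bid-to-society kernel: with $\bar p=\sum_{(u,k)}\mu[u,k]\sum_a\pi[a\mid u,k]\gamma[\texttt{win}\mid a]a$, $f^{\text{low}}=\lceil\bar p\rceil-\bar p$, $f^{\text{high}}=1-f^{\text{low}}$, a winner moves to $k-a+\lfloor\bar p\rfloor$ w.p. $f^{\text{low}}$ and to $k-a+\lceil\bar p\rceil$ w.p. $f^{\text{high}}$; a loser (prob. $1-\gamma[\texttt{win}\mid a]$) moves to $k+\lfloor\bar p\rfloor$ w.p. $f^{\text{low}}$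 and $k+\lceil\bar p\rceil$ w.p. $f^{\text{high}}$. $L_r,L_p$ are Lipschitz constants of $r,p$ in $s=(\mu,\pi)$ (sup over entries), $R_{\max}=\sup_{s,x,a}|r[x,a](s)|$, $C_0=\sup_{s,s'\in\mathcal{M}\times\Pi}\|s-s'\|$, $C_{MF}=\frac{(1-\alpha)L_r+\alpha R_{\max}|\mathcal{X}|L_p}{(1-\alpha)^2}C_0$. $Q^*[\cdot,\cdot](s)$ is the optimal Q-function of the MDP with reward $r[\cdot](s)$, transitions $p[\cdot](s)$, discount $\alpha$ (unique fixed point of $Q\mapsto r(s)+\alpha\sum_{x'}p[x'\mid\cdot](s)\max_{a'}Q[x',a']$). A Stationary Nash Equilibrium is a pair $(\mu^*,\pi^* )$ with $\mu^*[x]=\sum_{x^-,a^-}\mu^*[x^-]\pi^*[a^-\mid x^-]p[x\mid x^-,a^-](\mu^*,\pi^* )$ for all $x$ and $\pi^*[\cdot\mid x]$ supported on $\arg\max_a Q^*[x,a](\mu^*,\pi^* )$ for all $x$. *)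

(* Defs.v *)
From HB Require Import structures.
From mathcomp Require Import all_boot all_order all_algebra.
From mathcomp Require Import reals.
Set Implicit Arguments. Unset Strict Implicit. Unset Printing Implicit Defensive.
Import Order.TTheory GRing.Theory Num.Theory.
Local Open Scope ring_scope.

(* U = {u 0, ..., u (n-1)} (u injective, positive),
   X = 'I_n * 'I_K.+1  (state (i,k) <-> (u i, k)),
   actions are encoded in 'I_K.+1; the admissible ones in state (i,k)
   are those a with a <= k.
   A mean field / policy pair s = (mu, pi) is a pair of finite functions
   mu : {ffun X -> R}, pi : {ffun X * 'I_K.+1 -> R}  (pi (x,a) = pi[a|x]). *)

Notation stT n K := ('I_n * 'I_K.+1)%type.
Notation actT K := 'I_K.+1.
Notation mfT R n K := {ffun ('I_n * 'I_K.+1) -> R}.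
Notation polT R n K := {ffun (('I_n * 'I_K.+1) * 'I_K.+1) -> R}.

Section Karma.
Variables (R : realType) (n K : nat).

Local Notation stT := (stT n K).
Local Notation actT := (actT K).
Local Notation mfT := (mfT R n K).
Local Notation polT := (polT R n K).

Definition adm (x : stT) (a : actT) : bool := (a <= x.2)%N.

Definition in_M (mu : mfT) : Prop :=
  (forall x, 0 <= mu x) /\ \sum_(x : stT) mu x = 1.

Definition in_Pi (pi : polT) : Prop :=
  (forall x a, 0 <= pi (x, a)) /\ (forall x a, ~~ adm x a -> pi (x, a) = 0) /\
  (forall x, \sum_(a : actT) pi (x, a) = 1).

Definition Pwin (a a' : actT) : R :=
  if (a' < a)%N then 1 else if (a < a')%N then 0 else 2^-1.

Definition gamma_win (mu : mfT) (pi : polT) (a : actT) : R :=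
  \sum_(x' : stT) \sum_(a' : actT) mu x' * pi (x', a') * Pwin a a'.

Definition reward (u : 'I_n -> R) (mu : mfT) (pi : polT) (x : stT) (a : actT) : R :=
  u x.1 * gamma_win mu pi a.

Definition pbar (mu : mfT) (pi : polT) : R :=
  \sum_(x : stT) mu x * \sum_(a : actT) pi (x, a) * gamma_win mu pi a * (nat_of_ord a)%:R.

Definition f_low (mu : mfT) (pi : polT) : R :=
  (Num.ceil (pbar mu pi))%:~R - pbar mu pi.
Definition f_high (mu : mfT) (pi : polT) : R := 1 - f_low mu pi.

(* pay-bid-to-society karma kernel kappa[k+ | k, a](mu, pi) for k+ in {0..K}:
   the probability that the next karma equals k+. *)
Definition kappa (mu : mfT) (pi : polT) (k : 'I_K.+1) (a : actT) (kp : 'I_K.+1) : R :=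
  let fl := Num.floor (pbar mu pi) in
  let cl := Num.ceil (pbar mu pi) in
  let g := gamma_win mu pi a in
  let ind (z : int) : R := if (Posz kp == z) then 1 else 0 in
  g * (f_low mu pi * ind (Posz k - Posz a + fl) + f_high mu pi * ind (Posz k - Posz a + cl))
  + (1 - g) * (f_low mu pi * ind (Posz k + fl) + f_high mu pi * ind (Posz k + cl)).

Definition trans (phi : 'I_n -> 'I_n -> R) (mu : mfT) (pi : polT)
  (xp : stT) (x : stT) (a : actT) : R :=
  phi x.1 xp.1 * kappa mu pi x.2 a xp.2.

(* maximum of Q[x', .] over the admissible actions A[k'] (nonempty: contains 0) *)
Definition maxQ (Q : stT -> actT -> R) (x : stT) : R :=
  \big[Num.max/Q x ord0]_(a : actT | adm x a) Q x a.

Definition is_Qstar (u : 'I_n -> R) (phi : 'I_n -> 'I_n -> R) (alpha : R)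
  (mu : mfT) (pi : polT) (Q : stT -> actT -> R) : Prop :=
  forall x a, adm x a ->
    Q x a = reward u mu pi x a
            + alpha * \sum_(xp : stT) trans phi mu pi xp x a * maxQ Q xp.

Definition is_SNE (u : 'I_n -> R) (phi : 'I_n -> 'I_n -> R) (alpha : R)
  (mu : mfT) (pi : polT) (Q : stT -> actT -> R) : Prop :=
  in_M mu /\ in_Pi pi /\
  (forall x, mu x = \sum_(xm : stT) \sum_(am : actT) mu xm * pi (xm, am) * trans phi mu pi x xm am) /\
  (forall x a, 0 < pi (x, a) -> adm x a /\ Q x a = maxQ Q x).

Definition s_sub (s s' : mfT * polT) : mfT * polT := (s.1 - s'.1, s.2 - s'.2).

Definition is_norm (nrm : mfT * polT -> R) : Prop :=
  (forall v : mfT * polT, nrm v = 0 -> v = (0, 0)) /\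
  (forall (c : R) (v : mfT * polT), nrm ([ffun x => c * v.1 x], [ffun y => c * v.2 y]) = `|c| * nrm v) /\
  (forall v w : mfT * polT, nrm (v.1 + w.1, v.2 + w.2) <= nrm v + nrm w).

End Karma.

(* Main.v *)
Require Import Defs.
From HB Require Import structures.
From mathcomp Require Import all_boot all_order all_algebra.
From mathcomp Require Import reals.
From mathcomp Require Import ring lra.
Import Order.TTheory GRing.Theory Num.Theory.
Local Open Scope ring_scope.

Lemma Pwin_bnd (R : realType) K (a a' : 'I_K.+1) : 0 <= Pwin R a a' <= 1.
Proof. rewrite /Pwin; case: ifP => _; first lra. case: ifP => _; lra. Qed.

Lemma gamma_bnd (R : realType) n K (mu : mfT R n K) (pi : polT R n K) a :
  in_M mu -> in_Pi pi -> 0 <= gamma_win mu pi a <= 1.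
Proof.
move=> [mu0 mu1] [pi0 [_ pi1]]; apply/andP; split.
  apply: sumr_ge0 => x _; apply: sumr_ge0 => a' _.
  have := Pwin_bnd R K a a'; move/andP=> [h _].
  by apply: mulr_ge0 => //; apply: mulr_ge0.
rewrite -mu1; apply: ler_sum => x _.
apply: (@le_trans _ _ (\sum_(a' : 'I_K.+1) mu x * pi (x, a'))).
  apply: ler_sum => a' _; have := Pwin_bnd R K a a'; move/andP=> [_ h].
  by apply: ler_piMr => //; apply: mulr_ge0.
by rewrite -mulr_sumr pi1 mulr1.
Qed.

Arguments gamma_bnd {R n K mu pi} a _ _.
Lemma flow_bnd (R : realType) n K (mu : mfT R n K) (pi : polT R n K) :
  0 <= f_low mu pi <= 1 /\ 0 <= f_high mu pi <= 1.
Proof.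
rewrite /f_high /f_low; have := ceil_itv (pbar mu pi); rewrite intrB.
move: (pbar mu pi) => p; move: ((Num.ceil p)%:~R : R) => c; lra.
Qed.

Lemma ind_sum (R : realType) K (z : int) :
  0 <= \sum_(kp : 'I_K.+1) (if Posz kp == z then 1 else 0 : R) <= 1.
Proof.
apply/andP; split.
  by apply: sumr_ge0 => k _; case: eqP.
case: (pickP (fun kp : 'I_K.+1 => Posz kp == z)) => [k0 Hk0 | H].
  rewrite (bigD1 k0) //= Hk0 big1 ?addr0 // => k nk.
  case: eqP => // hk; exfalso; move/eqP: Hk0 => hk0.
  move: nk; rewrite -hk in hk0; case: hk0 => /ord_inj ->; by rewrite eqxx.
by rewrite big1 ?ler01 // => k _; rewrite H.
Qed.

Lemma kappa_ge0 (R : realType) n K (mu : mfT R n K) (pi : polT R n K) k a kp :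
  in_M mu -> in_Pi pi -> 0 <= kappa mu pi k a kp.
Proof.
move=> hM hP; have /andP[g0 g1] := gamma_bnd a hM hP.
have [/andP[l0 l1] /andP[h0 h1]] := flow_bnd R n K mu pi.
rewrite /kappa.
have I : forall z : int, 0 <= (if Posz kp == z then 1 else 0 : R) by move=> z; case: eqP.
apply: addr_ge0; apply: mulr_ge0; rewrite ?subr_ge0 //;
  apply: addr_ge0; apply: mulr_ge0 => //.
Qed.

Lemma arith_aux (R : realType) (g fl fh s1 s2 s3 s4 : R) :
  0 <= g -> g <= 1 -> 0 <= fl -> 0 <= fh -> fh = 1 - fl ->
  0 <= s1 -> s1 <= 1 -> 0 <= s2 -> s2 <= 1 -> 0 <= s3 -> s3 <= 1 -> 0 <= s4 -> s4 <= 1 ->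
  g * (fl * s1 + fh * s2) + (1 - g) * (fl * s3 + fh * s4) <= 1.
Proof.
move=> g0 g1 l0 h0 efh a0 a1 b0 b1 c0 c1 d0 d1.
have X1 : fl * s1 + fh * s2 <= 1.
  have := ler_piMr l0 a1; have := ler_piMr h0 b1; lra.
have X2 : fl * s3 + fh * s4 <= 1.
  have := ler_piMr l0 c1; have := ler_piMr h0 d1; lra.
have := ler_piMr g0 X1; have g1' : 0 <= 1 - g by lra.
have := ler_piMr g1' X2; lra.
Qed.

Lemma kappa_sum (R : realType) n K (mu : mfT R n K) (pi : polT R n K) k a :
  in_M mu -> in_Pi pi -> \sum_kp kappa mu pi k a kp <= 1.
Proof.
move=> hM hP; have /andP[g0 g1] := gamma_bnd a hM hP.
have [/andP[l0 l1] /andP[h0 h1]] := flow_bnd R n K mu pi.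
rewrite /kappa.
set g := gamma_win mu pi a; set fl := f_low mu pi; set fh := f_high mu pi.
set F := Num.floor _; set C := Num.ceil _.
rewrite big_split /= -!mulr_sumr !big_split /= -!mulr_sumr.
have [/andP[a0 a1] [/andP[b0 b1] [/andP[c0 c1] /andP[d0 d1]]]] :=
  (ind_sum R K (Posz k - Posz a + F), (ind_sum R K (Posz k - Posz a + C), (ind_sum R K (Posz k + F), ind_sum R K (Posz k + C)))).
have efh : fh = 1 - fl by [].
by apply: arith_aux.
Qed.

Lemma trans_ge0 (R : realType) n K (phi : 'I_n -> 'I_n -> R) (mu : mfT R n K) (pi : polT R n K) xp x a :
  (forall i j, 0 <= phi i j) -> in_M mu -> in_Pi pi -> 0 <= trans phi mu pi xp x a.
Proof. move=> hphi hM hP; rewrite /trans; apply: mulr_ge0 => //; exact: kappa_ge0. Qed.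

Lemma trans_sum (R : realType) n K (phi : 'I_n -> 'I_n -> R) (mu : mfT R n K) (pi : polT R n K) x a :
  (forall i, \sum_(j < n) phi i j = 1) -> in_M mu -> in_Pi pi ->
  \sum_(xp : 'I_n * 'I_K.+1) trans phi mu pi xp x a <= 1.
Proof.
move=> hphi hM hP; rewrite /trans.
rewrite -(pair_bigA _ (fun i k => phi x.1 i * kappa mu pi x.2 a k)) /=.
under eq_bigr do rewrite -mulr_sumr.
by rewrite -mulr_suml hphi mul1r kappa_sum.
Qed.

Lemma maxQ_bound (R : realType) n K (Q : stT n K -> actT K -> R) x B :
  (forall a, adm x a -> `|Q x a| <= B) -> `|maxQ Q x| <= B.
Proof.
move=> h; rewrite /maxQ; apply: (big_ind (fun y => `|y| <= B)) => //.
- by apply: h.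
- by move=> y z hy hz; rewrite /Order.max; case: ifP.
Qed.

Lemma maxQ_diff (R : realType) n K (Q1 Q2 : stT n K -> actT K -> R) x B :
  (forall a, adm x a -> `|Q1 x a - Q2 x a| <= B) -> `|maxQ Q1 x - maxQ Q2 x| <= B.
Proof.
move=> h; rewrite /maxQ.
apply: (big_ind2 (fun y1 y2 => `|y1 - y2| <= B)) => //.
- by apply: h.
- move=> y1 y2 z1 z2; rewrite !ler_norml => /andP[a1 a2] /andP[b1 b2].
  rewrite /Order.max; case: ifP => h1; case: ifP => h2; apply/andP; split;
    (try lra); move: h1 h2; (try move/negbT); (try move/negbT); rewrite ?ltNge ?negbK => h1 h2; lra.
Qed.

Definition bmax (R : realType) (T : finType) (P : pred T) (f : T -> R) : R :=
  \big[Num.max/0]_(t | P t) f t.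
Arguments bmax {R T} P f.

Lemma bmax_ge0 (R : realType) (T : finType) (P : pred T) (f : T -> R) : 0 <= bmax P f.
Proof.
rewrite /bmax; elim/big_rec: _ => // i y _ hy.
rewrite /Order.max; case: ifP => // /negbT; rewrite -leNgt => h; exact: le_trans h.
Qed.

Arguments bmax_ge0 {R T} P f.
Lemma bmax_ub (R : realType) (T : finType) (P : pred T) (f : T -> R) t : P t -> f t <= bmax P f.
Proof.
move=> Pt; rewrite /bmax (bigD1 t) //=.
set r := \big[_/_]_(_ | _) _.
rewrite /Order.max; case: ifP => [/ltW // | _]; exact: lexx.
Qed.

Arguments bmax_ub {R T P f} t _.
Lemma bmax_le (R : realType) (T : finType) (P : pred T) (f : T -> R) c :
  0 <= c -> (forall t, P t -> f t <= c) -> bmax P f <= c.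
Proof.
move=> c0 h; rewrite /bmax; apply: (big_ind (fun y => y <= c)) => //.
by move=> y z hy hz; rewrite /Order.max; case: ifP.
Qed.

Arguments bmax_le {R T P f} c _ _.
Lemma bmax_contr (R : realType) (T : finType) (P : pred T) (f : T -> R) c al :
  0 <= al -> al < 1 -> 0 <= c -> (forall t, P t -> f t <= c + al * bmax P f) ->
  bmax P f <= c / (1 - al).
Proof.
move=> a0 a1 c0 h.
have M0 := bmax_ge0 P f.
have : bmax P f <= c + al * bmax P f.
  apply: bmax_le => //; apply: addr_ge0 => //; exact: mulr_ge0.
move: (bmax P f) M0 => M M0 hM.
rewrite ler_pdivlMr; last lra.
lra.
Qed.
Arguments bmax_contr {R T P f} c al _ _ _ _.

Lemma sum_bnd (R : realType) (T : finType) (p m : T -> R) B :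
  (forall t, 0 <= p t) -> \sum_t p t <= 1 -> 0 <= B -> (forall t, `|m t| <= B) ->
  `|\sum_t p t * m t| <= B.
Proof.
move=> p0 p1 B0 hm; apply: le_trans (ler_norm_sum _ _ _) _.
apply: (@le_trans _ _ (\sum_t p t * B)).
  apply: ler_sum => t _; rewrite normrM ger0_norm //; exact: ler_wpM2l.
by rewrite -mulr_suml; apply: ler_piMl.
Qed.

Lemma sum_bnd2 (R : realType) (T : finType) (q m : T -> R) c B :
  (forall t, `|q t| <= c) -> 0 <= B -> (forall t, `|m t| <= B) ->
  `|\sum_t q t * m t| <= #|{: T}|%:R * (c * B).
Proof.
move=> hq B0 hm; apply: le_trans (ler_norm_sum _ _ _) _.
apply: (@le_trans _ _ (\sum_(t : T) c * B)).
  apply: ler_sum => t _; rewrite normrM; apply: ler_pM => //; exact: (le_trans _ (hq t)).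
by rewrite sumr_const mulr_natl.
Qed.

Lemma ffunBE (T : finType) (V : zmodType) (f g : {ffun T -> V}) y : (f - g) y = f y - g y.
Proof. by rewrite !ffunE. Qed.

Lemma sub1 (R : realType) n K (mu mu' : mfT R n K) (pi pi' : polT R n K) x y :
  (s_sub (mu,pi) (mu',pi')).1 x = mu x - mu' x /\ (s_sub (mu,pi) (mu',pi')).2 y = pi y - pi' y.
Proof. by rewrite /s_sub /= !ffunE. Qed.

Lemma nrm_ge0 (R : realType) n K (nrm : mfT R n K * polT R n K -> R) :
  is_norm nrm -> forall v, 0 <= nrm v.
Proof.
move=> [h0 [hom tri]] v.
set w := ([ffun x => -1 * v.1 x], [ffun y => -1 * v.2 y]).
have hw : nrm w = nrm v by rewrite /w hom normrN normr1 mul1r.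
have h := tri v w.
have e : (v.1 + w.1, v.2 + w.2) = ([ffun x => 0 * v.1 x], [ffun y => 0 * v.2 y]).
  congr pair; apply/ffunP => x; rewrite !ffunE; ring.
move: h; rewrite e hom normr0 mul0r hw; lra.
Qed.

Theorem mainTheorem4
  (R : realType) (n K : nat)
  (u : 'I_n -> R) (u_inj : injective u) (u_pos : forall i, 0 < u i)
  (phi : 'I_n -> 'I_n -> R)
  (phi_ge0 : forall i j, 0 <= phi i j) (phi_sum : forall i, \sum_(j < n) phi i j = 1)
  (alpha : R) (alpha_ge0 : 0 <= alpha) (alpha_lt1 : alpha < 1)
  (nrm : mfT R n K * polT R n K -> R) (nrm_norm : is_norm nrm)
  (* L_r, L_p: Lipschitz constants of r, p on M x Pi (sup over entries) *)
  (Lr Lp Rmax C0 : R)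
  (Lr_ge0 : 0 <= Lr) (Lp_ge0 : 0 <= Lp) (Rmax_ge0 : 0 <= Rmax)
  (Lr_lip : forall mu pi mu' pi', in_M mu -> in_Pi pi -> in_M mu' -> in_Pi pi' ->
     forall x a, adm x a ->
     `|reward u mu pi x a - reward u mu' pi' x a| <= Lr * nrm (s_sub (mu, pi) (mu', pi')))
  (Lp_lip : forall mu pi mu' pi', in_M mu -> in_Pi pi -> in_M mu' -> in_Pi pi' ->
     forall xp x a, adm x a ->
     `|trans phi mu pi xp x a - trans phi mu' pi' xp x a|
        <= Lp * nrm (s_sub (mu, pi) (mu', pi')))
  (* R_max >= sup |r| *)
  (Rmax_bound : forall (mu : mfT R n K) (pi : polT R n K), in_M mu -> in_Pi pi -> forall x a, adm x a ->
     `|reward u mu pi x a| <= Rmax)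
  (* C_0 >= sup ||s - s'|| *)
  (C0_bound : forall mu pi mu' pi', in_M mu -> in_Pi pi -> in_M mu' -> in_Pi pi' ->
     nrm (s_sub (mu, pi) (mu', pi')) <= C0)
  (* the Stationary Nash Equilibrium s_star = (mu_star, pi_star) and Q_star at s_star *)
  (mus : mfT R n K) (pis : polT R n K) (Qs : stT n K -> actT K -> R)
  (Qs_opt : is_Qstar u phi alpha mus pis Qs)
  (sne : is_SNE u phi alpha mus pis Qs)
  (* action gap: astar x = pi_star(x) is the unique maximiser, with gap at least delta > 0 *)
  (astar : stT n K -> actT K) (astar_adm : forall x, adm x (astar x))
  (delta : R) (delta_gt0 : 0 < delta)
  (gap : forall x a, adm x a -> a != astar x -> Qs x a <= Qs x (astar x) - delta)
  (N : nat) (N_gt0 : (0 < N)%N)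
  (N_large : N%:R > 2 * ((((1 - alpha) * Lr + alpha * Rmax * (#|{: stT n K}|)%:R * Lp)
                          / (1 - alpha) ^+ 2) * C0) / delta) :
  forall (mua : mfT R n K) (pit : polT R n K), in_M mua -> in_Pi pit ->
  let mut := [ffun x => (N%:R - 1) / N%:R * mus x + N%:R^-1 * mua x] in
  let pitl := [ffun y => (N%:R - 1) / N%:R * pis y + N%:R^-1 * pit y] in
  forall Qt : stT n K -> actT K -> R, is_Qstar u phi alpha mut pitl Qt ->
  forall x a, adm x a -> a != astar x -> Qt x a < Qt x (astar x).
Proof.
move=> mua pit hMa hPa mut pitl Qt Qt_opt x0 a0 ha0 na0.
have [hM [hP [_ _]]] := sne.
have [hMa0 hMa1] := hMa; have [hPa0 [hPa1 hPa2]] := hPa.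
have [hM0 hM1] := hM; have [hP0 [hP1 hP2]] := hP.
have hN : (0 < N%:R :> R) by rewrite ltr0n.
have hN1 : (1 <= N%:R :> R) by rewrite ler1n.
have c1 : 0 <= (N%:R - 1) / N%:R :> R by apply: divr_ge0; lra.
have c2 : 0 <= N%:R^-1 :> R by rewrite invr_ge0; lra.
have c12 : (N%:R - 1) / N%:R + N%:R^-1 = 1 :> R by field; lra.
have hMt : in_M mut.
  split.
    by move=> x; rewrite /mut ffunE; apply: addr_ge0; apply: mulr_ge0.
  rewrite /mut; under eq_bigr do rewrite ffunE.
  by rewrite big_split /= -!mulr_sumr hM1 hMa1 !mulr1.
have hPt : in_Pi pitl.
  split; [|split].
  - by move=> x a; rewrite /pitl ffunE; apply: addr_ge0; apply: mulr_ge0.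
  - by move=> x a na; rewrite /pitl ffunE hP1 // hPa1 // !mulr0 addr0.
  - move=> x; rewrite /pitl; under eq_bigr do rewrite ffunE.
    by rewrite big_split /= -!mulr_sumr hP2 hPa2 !mulr1.
set d := nrm (s_sub (mut, pitl) (mus, pis)).
have hd : d <= N%:R^-1 * C0.
  have [_ [hom _]] := nrm_norm.
  have -> : d = `|N%:R^-1| * nrm (s_sub (mua, pit) (mus, pis)).
    rewrite -hom /d; congr nrm; rewrite [LHS]surjective_pairing; congr pair;
      apply/ffunP => x; rewrite [in RHS]ffunE.
      have [-> _] := sub1 _ _ _ mut mus pitl pis x (x, ord0).
      have [-> _] := sub1 _ _ _ mua mus pit pis x (x, ord0).
      by rewrite /mut /pitl !ffunE; field; lra.
    have [_ ->] := sub1 _ _ _ mut mus pitl pis x.1 x.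
    have [_ ->] := sub1 _ _ _ mua mus pit pis x.1 x.
    by rewrite /mut /pitl !ffunE; field; lra.
  rewrite ger0_norm //; apply: ler_wpM2l => //; exact: C0_bound.
have d0 : 0 <= d by exact: nrm_ge0.
set B := Rmax / (1 - alpha).
have hB0 : 0 <= B by apply: divr_ge0; lra.
set M := bmax (fun p : stT n K * actT K => adm p.1 p.2) (fun p => `|Qs p.1 p.2|).
have hMB : M <= B.
  apply: bmax_contr => //.
  move=> [x a] /= ha; rewrite Qs_opt //.
  apply: le_trans (ler_normD _ _) _.
  apply: lerD; first exact: Rmax_bound.
  rewrite normrM (ger0_norm alpha_ge0); apply: ler_wpM2l => //.
  apply: sum_bnd.
  - move=> xp; exact: trans_ge0.
  - exact: trans_sum.
  - exact: bmax_ge0.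
  - move=> xp; apply: maxQ_bound => a' ha'; exact: (bmax_ub (xp, a') ha').
have hQsB : forall x, `|maxQ Qs x| <= B.
  move=> x; apply: maxQ_bound => a ha; apply: le_trans hMB; exact: (bmax_ub (x,a) ha).
set D := bmax (fun p : stT n K * actT K => adm p.1 p.2) (fun p => `|Qt p.1 p.2 - Qs p.1 p.2|).
set A := Lr * d + alpha * (#|{: stT n K}|%:R * ((Lp * d) * B)).
have A0 : 0 <= A.
  apply: addr_ge0; first exact: mulr_ge0.
  apply: mulr_ge0 => //; apply: mulr_ge0 => //; apply: mulr_ge0 => //; exact: mulr_ge0.
have hD : D <= A / (1 - alpha).
  apply: bmax_contr => //.
  move=> [x a] /= ha.
  rewrite Qt_opt // Qs_opt //.
  set r1 := reward u mut pitl x a; set r2 := reward u mus pis x a.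
  set S1 := \sum_xp _; set S2 := \sum_xp _.
  have ES : S1 - S2 = \sum_xp trans phi mut pitl xp x a * (maxQ Qt xp - maxQ Qs xp)
      + \sum_xp (trans phi mut pitl xp x a - trans phi mus pis xp x a) * maxQ Qs xp.
    rewrite /S1 /S2 -big_split /= -sumrB; apply: eq_bigr => xp _; ring.
  have -> : r1 + alpha * S1 - (r2 + alpha * S2) = (r1 - r2) + alpha * (S1 - S2) by ring.
  rewrite ES.
  have h1 : `|r1 - r2| <= Lr * d by exact: Lr_lip.
  have h2 : `|\sum_xp trans phi mut pitl xp x a * (maxQ Qt xp - maxQ Qs xp)| <= D.
    apply: sum_bnd.
    - move=> xp; exact: trans_ge0.
    - exact: trans_sum.
    - exact: bmax_ge0.
    - move=> xp; apply: maxQ_diff => a' ha'; exact: (bmax_ub (xp, a') ha').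
  have h3 : `|\sum_xp (trans phi mut pitl xp x a - trans phi mus pis xp x a) * maxQ Qs xp|
      <= #|{: stT n K}|%:R * ((Lp * d) * B).
    apply: sum_bnd2 => //.
    move=> xp; exact: Lp_lip.
  set T1 := \sum_xp _ * (_ - _) in h2 *; set T2 := \sum_xp (_ - _) * _ in h3 *.
  have h4 : alpha * `|T1 + T2| <= alpha * D + alpha * (#|{: stT n K}|%:R * ((Lp * d) * B)).
    rewrite -mulrDr; apply: ler_wpM2l => //.
    apply: le_trans (ler_normD _ _) _; exact: lerD.
  apply: le_trans (ler_normD _ _) _.
  rewrite normrM (ger0_norm alpha_ge0) /A -/D; lra.
set X := #|{: stT n K}|%:R : R.
set coef := ((1 - alpha) * Lr + alpha * Rmax * X * Lp) / (1 - alpha) ^+ 2.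
have coef0 : 0 <= coef.
  apply: divr_ge0; last by apply: exprn_ge0; lra.
  apply: addr_ge0; first by apply: mulr_ge0; lra.
  apply: mulr_ge0 => //; apply: mulr_ge0 => //; exact: mulr_ge0.
have eA : A / (1 - alpha) = coef * d.
  rewrite /A /coef /B -/X; field; lra.
have hDd : D <= coef * (N%:R^-1 * C0).
  apply: le_trans hD _; rewrite eA; exact: ler_wpM2l.
have hlarge : 2 * (coef * C0) < N%:R * delta.
  by move: N_large; rewrite -/X -/coef ltr_pdivrMr.
have h2D : 2 * D < delta.
  have : 2 * (coef * (N%:R^-1 * C0)) < delta.
    have -> : 2 * (coef * (N%:R^-1 * C0)) = (2 * (coef * C0)) / N%:R.
      by field; lra.
    rewrite ltr_pdivrMr //; lra.
  lra.
have hub : forall x a, adm x a -> `|Qt x a - Qs x a| <= D.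
  move=> x a ha; exact: (bmax_ub (x, a) ha).
have := hub _ _ ha0; have := hub _ _ (astar_adm x0); have := gap _ _ ha0 na0.
rewrite !ler_norml; lra.
Qed.
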